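(* Let $n$ be large, $R$ an integer with $1\le R\le\frac{\log n}{24\log\log n}$, $L=6R$ and $\eta=n^{1/(2L)}$. Let $\ell\in\{0,\ldots,L\}$ and $q$ an integer with $q\in\left[\eta^3,\frac{\eta^{2\ell-1}}{2^7}\right]$. Let $\sigma^A$ be any probability distribution with support $S_\ell^A$. If $\mu^A\sim\sigma^A$ and, conditionally on $\mu^A$, $\Theta=(\Theta_1,\ldots,\Theta_q)\sim\mathrm{Ber}(\mu^A)^{\otimes q}$, then $\Pr[\Theta\notin G_\ell^A]\le n^{-10}$.
   Context: For $\ell\in\{0,\ldots,L\}$, $S_\ell^A$ is the set of all numbers $\frac12+2\sum_{k:\,1\le2k+1\le\ell}\eta^{-(2k+1)}+2\sum_{k:\,\ell<2k+1\le L}X_{2k+1}\eta^{-(2k+1)}$ with all $X_{2k+1}\in\{0,1\}$. For $\theta\in\{0,1\}^q$ and $x\in(0,1)$, $p(\theta\mid x)=\prod_{j=1}^qx^{\theta_j}(1-x)^{1-\theta_j}$. $G_\ell^A$ is the set of sequences $\theta$ (of any length) such that for all $x,y\in S_\ell^A$, $\frac{p(\theta\mid x)}{p(\theta\mid y)}\in[e^{-4/\eta},e^{4/\eta}]$. $\mathrm{Ber}(x)$ denotes the Bernoulli distribution with mean $x$. *)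

(* Defs.v *)
From HB Require Import structures.
From mathcomp Require Import all_boot all_order all_algebra.
From mathcomp Require Import all_classical all_reals all_analysis.
Set Implicit Arguments. Unset Strict Implicit. Unset Printing Implicit Defensive.
Import Order.TTheory GRing.Theory Num.Theory.
Local Open Scope ring_scope.

(* S_ell^A : membership of x (eta, L, ell given). k ranges over nat with
   2k+1 <= L, hence k < L is a sufficient finite range. *)
Definition SA {R : realType} (eta : R) (L l : nat) (x : R) : Prop :=
  exists X : nat -> bool,
    x = 1/2 + 2 * (\sum_(k < L | (1 <= 2*k+1 <= l)%N) eta ^- (2*k+1))
            + 2 * (\sum_(k < L | (l < 2*k+1 <= L)%N) (X k)%:R * eta ^- (2*k+1)).

Definition plik {R : realType} {q : nat} (th : {ffun 'I_q -> bool}) (x : R) : R :=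
  \prod_(j < q) (x ^+ (th j : nat) * (1 - x) ^+ (1 - (th j : nat))).

Definition GA {R : realType} (eta : R) (L l : nat) {q : nat}
    (th : {ffun 'I_q -> bool}) : Prop :=
  forall x y : R, SA eta L l x -> SA eta L l y ->
    expR (- (4 / eta)) <= plik th x / plik th y <= expR (4 / eta).

(* Main.v *)
Require Import Defs.
From HB Require Import structures.
From mathcomp Require Import all_boot all_order all_algebra.
From mathcomp Require Import all_classical all_reals all_analysis.
From mathcomp Require Import lra zify ring.
Import Order.TTheory GRing.Theory Num.Theory.
Local Open Scope ring_scope.

Lemma geom_odd (R : realType) (c : R) : 0 <= c -> c <= 1/2 ->
  forall N l, \sum_(k < N | (l < 2*k+1)%N) c ^+ (2*k+1) <= 2 * c ^+ (l.+1).
Proof.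
move=> c0 c1; elim=> [|N IH] l.
  by rewrite big_ord0 mulr_ge0 // exprn_ge0.
rewrite big_mkcond big_ord_recl -big_mkcond /=.
have -> : \sum_(i < N | (l < 2 * (bump 0 i) + 1)%N) c ^+ (2 * bump 0 i + 1)
   = c^+2 * \sum_(i < N | (l - 2 < 2 * i + 1)%N) c ^+ (2 * i + 1).
  rewrite mulr_sumr; apply: eq_big => i.
    rewrite /bump /=; apply/idP/idP; lia.
  move=> _; rewrite -exprD; congr (_ ^+ _); rewrite /bump /=; lia.
have H := IH (l - 2)%N.
have c2 : 0 <= c ^+ 2 by rewrite exprn_ge0.
have H2 := ler_wpM2l c2 H.
move: H2; case: l {H} => [|[|l]] H2 /=.
- rewrite expr1 in H2 *.
  have : c^+2 * (2 * c) <= c / 2 by rewrite expr2; nra.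
  move: H2; set S := \sum_(i < N | _) _; lra.
- rewrite add0r; rewrite (le_trans H2) // expr1 !expr2; nra.
- rewrite add0r (le_trans H2) // mulrCA -exprD.
  by have -> : (2 + (l.+2 - 2).+1 = l.+3)%N by lia.
Qed.


Definition SAA {R : realType} (eta : R) (L l : nat) : R :=
  2 * (\sum_(k < L | (1 <= 2*k+1 <= l)%N) eta ^- (2*k+1)).

Lemma SAA_bound (R : realType) (eta : R) L l : 2 <= eta ->
  0 <= SAA eta L l <= 4 * eta^-1.
Proof.
move=> e2; have e0 : 0 < eta by lra.
have c0 : 0 <= eta^-1 by rewrite invr_ge0; lra.
have c1 : eta^-1 <= 1/2 by rewrite mul1r lef_pV2 ?posrE //; lra.
rewrite /SAA; apply/andP; split.
  by rewrite mulr_ge0 // sumr_ge0 // => k _; rewrite invr_ge0 exprn_ge0 //; lra.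
have := @geom_odd _ _ c0 c1 L 0; rewrite expr1 => H.
suff : \sum_(k < L | (1 <= 2 * k + 1 <= l)%N) eta ^- (2 * k + 1) <=
   \sum_(k < L | (0 < 2 * k + 1)%N) eta^-1 ^+ (2 * k + 1) by lra.
rewrite [X in X <= _]big_mkcond [X in _ <= X]big_mkcond /=; apply: ler_sum => k _.
rewrite addn1 ltn0Sn exprVn; case: ifP => _ //.
by rewrite invr_ge0 exprn_ge0 //; lra.
Qed.

Lemma SA_decomp (R : realType) (eta : R) L l x : 2 <= eta -> SA eta L l x ->
  exists B, x = 1/2 + SAA eta L l + 2 * B /\ 0 <= B <= 2 * eta^-1 ^+ l.+1.
Proof.
move=> e2 [X ->]; have e0 : 0 < eta by lra.
have c0 : 0 <= eta^-1 by rewrite invr_ge0; lra.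
have c1 : eta^-1 <= 1/2 by rewrite mul1r lef_pV2 ?posrE //; lra.
eexists; split; first reflexivity.
apply/andP; split.
  rewrite sumr_ge0 // => k _; rewrite mulr_ge0 // invr_ge0 exprn_ge0 //; lra.
apply: le_trans (@geom_odd _ _ c0 c1 L l).
rewrite [X in X <= _]big_mkcond [X in _ <= X]big_mkcond /=; apply: ler_sum => k _.
rewrite exprVn; case: ifP => /andP.
  case=> -> _; case: (X k); rewrite ?mul1r ?mul0r // invr_ge0 exprn_ge0 //; lra.
move=> _; case: ifP => _ //.
by rewrite invr_ge0 exprn_ge0 //; lra.
Qed.


Lemma expR_le2 (R : realType) (u : R) : -1/2 <= u -> u <= 1/2 ->
  expR u <= 1 + u + 2 * u^+2.
Proof.
move=> h1 h2.
have h := expR_ge1Dx (- u); rewrite expRN in h.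
have E0 := expR_gt0 u.
have h3 : expR u * (1 - u) <= 1.
  have : expR u * (1 - u) <= expR u * (expR u)^-1 by rewrite ler_pM2l //; lra.
  by rewrite mulfV ?gt_eqF.
have P1 : 1 <= (1 + u + 2 * u^+2) * (1 - u).
  have : 0 <= u^+2 * (1 - 2 * u) by rewrite mulr_ge0 ?sqr_ge0 //; lra.
  rewrite expr2; nra.
have : expR u <= expR u * ((1 + u + 2 * u^+2) * (1 - u)).
  by rewrite ler_peMr //; lra.
move: h3 P1; set P := 1 + u + _ => h3 P1.
have P0 : 0 <= P by rewrite /P expr2; nra.
rewrite mulrCA => H; apply: (le_trans H).
by rewrite ler_piMr.
Qed.

Definition cnt {R : realType} {q : nat} (th : {ffun 'I_q -> bool}) : R :=
  \sum_(j < q) ((th j : nat)%:R).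

Lemma mgf (R : realType) (q : nat) (mu lam : R) : 0 <= mu -> mu <= 1 ->
  -1/2 <= lam -> lam <= 1/2 ->
  \sum_(th : {ffun 'I_q -> bool}) plik th mu * expR (lam * (cnt th - q%:R * mu))
  <= expR (q%:R * (2 * lam^+2)).
Proof.
move=> m0 m1 l0 l1.
pose F (b : bool) :=
  mu ^+ b * (1 - mu) ^+ (1 - b) * expR (lam * ((b : nat)%:R - mu)).
have E : forall th : {ffun 'I_q -> bool},
    plik th mu * expR (lam * (cnt th - q%:R * mu)) = \prod_(j < q) (fun (_ : 'I_q) b => F b) j (th j).
  move=> th; rewrite /plik /F [RHS]big_split /=; congr (_ * _).
  rewrite -expR_sum; congr (expR _).
  rewrite -mulr_sumr sumrB /cnt sumr_const card_ord mulr_natl //.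
under eq_bigr do rewrite E.
rewrite -(bigA_distr_bigA (fun (_ : 'I_q) (b : bool) => F b)) /=.
under eq_bigr do rewrite big_bool.
rewrite prodr_const card_ord expRM_natl.
have G0 : 0 <= F true + F false.
  by rewrite /F addr_ge0 // !mulr_ge0 ?exprn_ge0 ?expR_ge0 //; lra.
apply: lerXn2r; rewrite ?nnegrE ?expR_ge0 //.
rewrite /F /= subnn subn0 !expr1 !expr0 mulr1 mul1r sub0r.
have e1 := @expR_le2 R (lam * (1 - mu)).
have e2 := @expR_le2 R (lam * (- mu)).
have a1 : -1/2 <= lam * (1 - mu) /\ lam * (1 - mu) <= 1/2 by split; nra.
have a2 : -1/2 <= lam * (- mu) /\ lam * (- mu) <= 1/2 by split; nra.
case: a1 => a1 a1'; case: a2 => a2 a2'.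
have {}e1 := e1 a1 a1'; have {}e2 := e2 a2 a2'.
have f1 := ler_wpM2l m0 e1.
have m1' : 0 <= 1 - mu by lra.
have f2 := ler_wpM2l m1' e2.
apply: le_trans (expR_ge1Dx _).
apply: le_trans (lerD f1 f2) _.
rewrite !expr2; nra.
Qed.

Lemma plik_gt0 (R : realType) q (th : {ffun 'I_q -> bool}) (x : R) :
  0 < x -> x < 1 -> 0 < plik th x.
Proof.
move=> x0 x1; rewrite /plik; apply: prodr_gt0 => j _.
by rewrite mulr_gt0 // exprn_gt0 // subr_gt0.
Qed.

Lemma ratio (R : realType) q (th : {ffun 'I_q -> bool}) (x y : R) :
  0 < x -> x < 1 -> 0 < y -> y < 1 ->
  plik th x / plik th y <= expR ((x - y) / (y * (1 - y)) * (cnt th - q%:R * y)).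
Proof.
move=> x0 x1 y0 y1.
have y1' : 0 < 1 - y by lra.
have x1' : 0 < 1 - x by lra.
rewrite /plik -prodf_div.
have -> : (x - y) / (y * (1 - y)) * (cnt th - q%:R * y) =
   \sum_(j < q) (x - y) / (y * (1 - y)) * ((th j : nat)%:R - y).
  by rewrite -mulr_sumr sumrB /cnt sumr_const card_ord mulr_natl.
rewrite expR_sum; apply: ler_prod => j _; apply/andP; split.
  by rewrite divr_ge0 // ltW // mulr_gt0 // exprn_gt0.
case: (th j) => /=.
  rewrite subnn !expr0 !expr1 !mulr1.
  have -> : (x - y) / (y * (1 - y)) * (1 - y) = (x - y) / y.
    by field; apply/andP; split; apply: lt0r_neq0.
  apply: le_trans (expR_ge1Dx _).
  have -> : x / y = 1 + (x - y) / y by field; apply: lt0r_neq0.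
  by [].
rewrite subn0 !expr0 !expr1 !mul1r.
have -> : (x - y) / (y * (1 - y)) * (0 - y) = ((1 - x) - (1 - y)) / (1 - y).
  by field; apply/andP; split; apply: lt0r_neq0.
apply: le_trans (expR_ge1Dx _).
have -> : (1 - x) / (1 - y) = 1 + ((1 - x) - (1 - y)) / (1 - y).
  by field; apply: lt0r_neq0.
by [].
Qed.


Lemma powce (R : realType) (c e : R) a b : c * e = 1 -> (b <= a)%N ->
  c ^+ a * e ^+ b = c ^+ (a - b).
Proof.
move=> ce ba; rewrite -{1}(subnK ba) exprD -mulrA -exprMn ce expr1n mulr1 //.
Qed.

Lemma powce' (R : realType) (c e : R) a b : c * e = 1 -> (a <= b)%N ->
  c ^+ a * e ^+ b = e ^+ (b - a).
Proof.
move=> ce ba; rewrite -{1}(subnK ba) exprD mulrCA -exprMn ce expr1n mulr1 //.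
Qed.



Lemma natfact1 l : (0 < l)%N -> (2 * l - 1 <= l.+1 * 2)%N /\ (l.+1 * 2 - (2 * l - 1) = 3)%N.
Proof. move=> h; split; lia. Qed.

Lemma arith (R : realType) (a z w d M : R) : - (4 * d) <= a -> a <= 4 * d ->
  - M <= z -> z <= M -> 1 / 5 <= w -> 0 <= d -> a / w * z <= 5 * (4 * d * M).
Proof.
move=> a1 a2 z1 z2 w5 d0.
have M0 : 0 <= M by lra.
have az : a * z <= 4 * d * M.
  have h1 : 0 <= (4 * d - a) * (M + z) by apply: mulr_ge0; lra.
  have h2 : 0 <= (4 * d + a) * (M - z) by apply: mulr_ge0; lra.
  nra.
have w0 : 0 < w by lra.
rewrite mulrAC ler_pdivrMr //.
have : 4 * d * M <= 5 * (4 * d * M) * w.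
  have : 0 <= 4 * d * M by apply: mulr_ge0 => //; lra.
  nra.
lra.
Qed.

Lemma ratio_bound (R : realType) (eta : R) L l q (th : {ffun 'I_q -> bool}) mu x y :
  1000 <= eta -> (1 <= l)%N -> q%:R <= eta ^+ (2 * l - 1) / 2 ^+ 7 ->
  SA eta L l mu -> SA eta L l x -> SA eta L l y ->
  `|cnt th - q%:R * mu| <= eta ^+ l / 6 ->
  plik th x / plik th y <= expR (4 / eta).
Proof.
move=> e1 l1 hq Sm Sx Sy hz.
have e2 : 2 <= eta by lra.
have e0 : 0 < eta by lra.
set c := eta^-1.
have ce : c * eta = 1 by rewrite mulVf // gt_eqF.
have c0 : 0 < c by rewrite invr_gt0.
have c1 : c <= 1/1000.
  have := ler_wpM2l (ltW c0) e1; rewrite ce.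
  lra.
have [A0 A1] : 0 <= SAA eta L l /\ SAA eta L l <= 4 * c.
  by apply/andP; apply: SAA_bound.
move: (@SA_decomp _ _ _ _ _ e2 Sm) (@SA_decomp _ _ _ _ _ e2 Sx) (@SA_decomp _ _ _ _ _ e2 Sy).
rewrite -/c.
set d := c ^+ l.+1; set A := SAA eta L l.
move=> [Bm [Em /andP[Bm0 Bm1]]] [Bx [Ex /andP[Bx0 Bx1]]] [By [Ey /andP[By0 By1]]].
subst mu x y.
have A0' : 0 <= A by exact: A0.
have A1' : A <= 4 * c by exact: A1.
clear A0 A1.
have d0 : 0 <= d by apply: exprn_ge0; exact: (ltW c0).
have dP : d * eta ^+ l = c.
  have h : (l <= l.+1)%N by exact: leqnSn.
  by rewrite /d (@powce _ _ _ _ _ ce h) subSn // subnn expr1.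
have qd : q%:R * d ^+ 2 <= c ^+ 3 / 128.
  have q0 : 0 <= d ^+ 2 by rewrite exprn_ge0.
  have := ler_wpM2r q0 hq.
  have -> : eta ^+ (2 * l - 1) / 2 ^+ 7 * d ^+ 2 = c ^+ 3 / 128.
    rewrite /d -exprM mulrAC [eta ^+ _ * _]mulrC.
    have [h h2] := @natfact1 l l1.
    rewrite (@powce _ _ _ _ _ ce h) h2.
    by rewrite -natrX.
  by [].
have dc : d <= c.
  rewrite /d exprS ler_piMr //; first exact: (ltW c0).
  apply: exprn_ile1; first exact: (ltW c0).
  apply: (le_trans c1); lra.
have y0 : 0 < 1 / 2 + A + 2 * By by lra.
have y1 : 1 / 2 + A + 2 * By < 1 by lra.
have x0 : 0 < 1 / 2 + A + 2 * Bx by lra.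
have x1 : 1 / 2 + A + 2 * Bx < 1 by lra.
apply: le_trans (@ratio R q th _ _ x0 x1 y0 y1) _.
rewrite ler_expR.
have /andP[zl zu] : - (eta ^+ l / 6) <= cnt th - q%:R * (1 / 2 + A + 2 * Bm) <= eta ^+ l / 6.
  by rewrite -ler_norml.
have q0 : 0 <= q%:R :> R by rewrite ler0n.
have qa : q%:R * (2 * Bm - 2 * By) <= q%:R * (4 * d) by apply: ler_wpM2l => //; lra.
have qb : - (q%:R * (4 * d)) <= q%:R * (2 * Bm - 2 * By).
  by rewrite -mulrN; apply: ler_wpM2l => //; lra.
have w5 : 1 / 5 <= (1 / 2 + A + 2 * By) * (1 - (1 / 2 + A + 2 * By)).
  have : 1 / 2 + A + 2 * By <= 1/2 + 1/100 by lra.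
  nra.
apply: le_trans.
  apply: (@arith R _ _ _ d (eta ^+ l / 6 + q%:R * (4 * d))) => //; lra.
have -> : 5 * (4 * d * (eta ^+ l / 6 + q%:R * (4 * d))) =
   20 * (d * eta ^+ l) / 6 + 80 * (q%:R * d ^+ 2) by rewrite expr2; field.
rewrite dP.
have : c ^+ 3 <= c / 1000.
  have : c * c <= 1/1000 * 1 by apply: ler_pM => //; try lra; exact: (ltW c0).
  rewrite !exprS expr0 mulr1; nra.
lra.
Qed.


Lemma SA_01 (R : realType) (eta : R) L l x : 1000 <= eta -> SA eta L l x -> 0 < x < 1.
Proof.
move=> e1 Sx.
have e2 : 2 <= eta by lra.
have e0 : 0 < eta by lra.
have c0 : 0 < eta^-1 by rewrite invr_gt0.
have c1 : eta^-1 <= 1/1000.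
  have := ler_wpM2l (ltW c0) e1; rewrite mulVf ?gt_eqF //.
  lra.
have /andP[A0 A1] := @SAA_bound R eta L l e2.
have [B [-> /andP[B0 B1]]] := @SA_decomp R eta L l x e2 Sx.
have dc : eta^-1 ^+ l.+1 <= eta^-1.
  rewrite exprS ler_piMr //; first exact: (ltW c0).
  apply: exprn_ile1; first exact: (ltW c0).
  apply: (le_trans c1); lra.
apply/andP; split; lra.
Qed.

Lemma goodGA (R : realType) (eta : R) L l q (th : {ffun 'I_q -> bool}) mu :
  1000 <= eta -> (1 <= l)%N -> q%:R <= eta ^+ (2 * l - 1) / 2 ^+ 7 ->
  SA eta L l mu -> `|cnt th - q%:R * mu| <= eta ^+ l / 6 -> GA eta L l th.
Proof.
move=> e1 l1 hq Sm hz x y Sx Sy.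
have h1 := @ratio_bound R eta L l q th mu x y e1 l1 hq Sm Sx Sy hz.
have h2 := @ratio_bound R eta L l q th mu y x e1 l1 hq Sm Sy Sx hz.
have /andP[x0 x1] := @SA_01 R eta L l x e1 Sx.
have /andP[y0 y1] := @SA_01 R eta L l y e1 Sy.
have px := @plik_gt0 R q th x x0 x1.
have py := @plik_gt0 R q th y y0 y1.
apply/andP; split; last exact: h1.
rewrite expRN -[plik th x / _]invrK invf_div lef_pV2 ?posrE ?expR_gt0 ?divr_gt0 //.
Qed.

Lemma natfact2 l : (0 < l)%N -> (l - 1 <= l)%N /\ (l - (l - 1) = 1)%N /\
   ((l - 1) * 2 <= 2 * l - 1)%N /\ (2 * l - 1 - (l - 1) * 2 = 1)%N.
Proof. move=> h; split; [lia | split; [lia | split; lia]]. Qed.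

Lemma tail (R : realType) (eta : R) L l q mu :
  1000 <= eta -> (1 <= l)%N -> q%:R <= eta ^+ (2 * l - 1) / 2 ^+ 7 ->
  SA eta L l mu ->
  \sum_(th : {ffun 'I_q -> bool} | ~~ `[< GA eta L l th >]) plik th mu
    <= 2 * expR (- (eta / 12) + eta / 256).
Proof.
move=> e1 l1 hq Sm.
have e0 : 0 < eta by lra.
pose c := eta^-1.
have ce : c * eta = 1 by rewrite mulVf // gt_eqF.
have c0 : 0 < c by rewrite invr_gt0.
have c1 : c <= 1.
  have := ler_wpM2l (ltW c0) e1; rewrite ce; lra.
have /andP[m0 m1] := @SA_01 R eta L l mu e1 Sm.
pose lam := c ^+ (l - 1) / 2.
pose D := eta ^+ l / 6.
have cp : 0 <= c ^+ (l - 1) by apply: exprn_ge0; exact: (ltW c0).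
have lam0 : 0 <= lam by apply: divr_ge0 => //.
have lam1 : lam <= 1/2.
  have : c ^+ (l - 1) <= 1 by apply: exprn_ile1 => //; exact: (ltW c0).
  rewrite /lam; lra.
have [n1 [n2 [n3 n4]]] := @natfact2 l l1.
have lamD : lam * D = eta / 12.
  by rewrite /lam /D mulrACA (@powce' _ _ _ _ _ ce n1) n2 expr1; field.
have lamq : q%:R * (2 * lam ^+ 2) <= eta / 256.
  have -> : q%:R * (2 * lam ^+ 2) = q%:R * c ^+ ((l - 1) * 2) / 2.
    by rewrite /lam exprMn exprM; field.
  have h0 : 0 <= c ^+ ((l - 1) * 2) / 2.
    by apply: divr_ge0 => //; apply: exprn_ge0; exact: (ltW c0).
  have hh := ler_wpM2r h0 hq.
  rewrite -mulrA; apply: (le_trans hh).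
  rewrite mulrACA [eta ^+ _ * _]mulrC (@powce' _ _ _ _ _ ce n3) n4 expr1.
  have -> : (2:R) ^+ 7 = 128 by rewrite -natrX.
  have -> : eta * (128^-1 * 2^-1) = eta / 256 by field.
  by [].
pose z (th : {ffun 'I_q -> bool}) := cnt th - q%:R * mu.
have H : forall th : {ffun 'I_q -> bool},
    (if ~~ `[< GA eta L l th >] then plik th mu else 0) <=
    plik th mu * (expR (- (lam * D)) * (expR (lam * z th) + expR ((- lam) * z th))).
  move=> th; have p0 := @plik_gt0 R q th mu m0 m1.
  case: asboolP => /= hG; first by rewrite mulr_ge0 ?addr_ge0 ?expR_ge0 // ltW.
  rewrite ler_peMr ?(ltW p0) //.
  have hz : D < `|z th|.
    rewrite ltNge; apply/negP => hz; apply: hG.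
    exact: (@goodGA R eta L l q th mu e1 l1 hq Sm hz).
  have E1 := expR_ge0 (lam * z th); have E2 := expR_ge0 ((- lam) * z th).
  case: (lerP 0 (z th)) => zs.
    rewrite ger0_norm // in hz.
    apply: le_trans (_ : expR (- (lam * D)) * expR (lam * z th) <= _).
      rewrite -expRD; apply: le_trans (expR_ge1Dx _); nra.
    by rewrite ler_pM2l ?expR_gt0 //; lra.
  rewrite ltr0_norm // in hz.
  apply: le_trans (_ : expR (- (lam * D)) * expR ((- lam) * z th) <= _).
    rewrite -expRD; apply: le_trans (expR_ge1Dx _); nra.
  by rewrite ler_pM2l ?expR_gt0 //; lra.
rewrite big_mkcond /=; apply: le_trans (ler_sum _ (fun th _ => H th)) _.
under eq_bigr do rewrite mulrCA mulrDr.
rewrite -mulr_sumr big_split /=.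
have M1 := @mgf R q mu lam (ltW m0) (ltW m1).
have M2 := @mgf R q mu (- lam) (ltW m0) (ltW m1).
rewrite sqrrN in M2.
have M1' := M1 ltac:(lra) ltac:(lra).
have M2' := M2 ltac:(lra) ltac:(lra).
rewrite lamD.
apply: le_trans (_ : expR (- (eta / 12)) * (2 * expR (q%:R * (2 * lam ^+ 2))) <= _).
  rewrite ler_pM2l ?expR_gt0 //; rewrite /z in M1' M2'; lra.
rewrite mulrCA ler_pM2l // -expRD ler_expR; lra.
Qed.


Lemma ln2_ge (R : realType) : 1/2 <= ln (2 : R).
Proof.
have h := @expR_le2 R (1/2) ltac:(lra) ltac:(lra).
have h' : expR (1/2 : R) <= 2 by move: h; rewrite expr2; lra.
have := h'; rewrite -ler_ln ?posrE ?expR_gt0 // expRK.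
by [].
Qed.

Lemma final_num (R : realType) (u eta : R) : 131 <= u -> u ^+ 2 <= eta ->
  2 * expR (- (eta / 12) + eta / 256) <= expR (- (10 * u)).
Proof.
move=> u1 ue.
have h : - (eta / 12) + eta / 256 <= - (10 * u) - 1.
  have : 131 * u <= u ^+ 2 by rewrite expr2; nra.
  lra.
have e1 : 2 <= expR (1 : R) by have := expR_ge1Dx (1 : R); lra.
apply: le_trans (_ : 2 * expR (- (10 * u) - 1) <= _).
  by rewrite ler_pM2l ?ler_expR //; lra.
rewrite expRD mulrCA ler_piMr ?expR_ge0 // expRN.
by rewrite ler_pdivrMr ?expR_gt0 // mul1r.
Qed.

Theorem lemma7 (R : realType) :
  exists N0 : nat, forall n : nat, (N0 <= n)%N ->
  forall r : nat, (1 <= r)%N ->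
    (r%:R : R) <= ln (n%:R : R) / (24 * ln (ln (n%:R : R))) ->
  forall l : nat, (l <= 6 * r)%N ->
  forall q : nat,
    ((n%:R : R) `^ (1 / (2 * (6 * r)%N)%:R)) ^+ 3 <= q%:R ->
    q%:R <= ((n%:R : R) `^ (1 / (2 * (6 * r)%N)%:R)) `^ (2 * l%:R - 1) / 2 ^+ 7 ->
  forall (s : seq R) (w : R -> R),
    uniq s ->
    (forall x, x \in s <-> SA ((n%:R : R) `^ (1 / (2 * (6 * r)%N)%:R)) (6 * r) l x) ->
    (forall x, x \in s -> 0 < w x) ->
    \sum_(x <- s) w x = 1 ->
    \sum_(x <- s) w x *
      (\sum_(th : {ffun 'I_q -> bool}
             | ~~ `[< GA ((n%:R : R) `^ (1 / (2 * (6 * r)%N)%:R)) (6 * r) l th >])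
         plik th x)
    <= (n%:R : R) ^- 10.
Proof.
exists (2 ^ 262)%N => n hn r r1 hr l hl q hq1 hq2 s w us hs wpos wsum.
have N2 : (((2 ^ 262)%N)%:R : R) <= n%:R.
  rewrite ler_nat; exact: hn.
clear hn; rewrite natrX in N2.
have N0 : 0 < (n%:R : R).
  apply: lt_le_trans N2; exact: exprn_gt0.
have u131 : 131 <= ln (n%:R : R).
  have h2 : (0 : R) < 2 ^+ 262 by exact: exprn_gt0.
  have : ln ((2 : R) ^+ 262) <= ln (n%:R : R) by rewrite ler_ln.
  rewrite lnXn //; have := @ln2_ge R.
  rewrite -[ln (2:R) *+ 262]mulr_natr; move=> a b; apply: le_trans b; clear -a; lra.
clear N2; move: hr hq1 hq2 hs N0 u131.
have -> : ((2 * (6 * r))%N%:R : R) = 12 * r%:R by rewrite mulnA natrM.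
move: (n%:R : R) => N hr hq1 hq2 hs N0 u131.
have rpos : 0 < (r%:R : R) by rewrite ltr0n.
have lu : 0 < ln (ln N) by apply: ln_gt0; lra.
have hr' : 24 * r%:R * ln (ln N) <= ln N.
  by move: hr; rewrite ler_pdivlMr ?mulr_gt0 // mulrCA mulrA.
have eta_ge : (ln N) ^+ 2 <= N `^ (1 / (12 * r%:R)).
  rewrite /powR gt_eqF //.
  have -> : (ln N) ^+ 2 = expR (2%:R * ln (ln N)).
    by rewrite expRM_natl lnK // posrE; lra.
  rewrite ler_expR.
  rewrite mul1r [X in _ <= X]mulrC ler_pdivlMr; last by apply: mulr_gt0.
  move: hr'; clear; lra.
move: hq1 hq2 hs eta_ge; move: (N `^ (1 / (12 * r%:R))) => eta hq1 hq2 hs eta_ge.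
have e1000 : 1000 <= eta.
  have : 131 * ln N <= ln N ^+ 2 by rewrite expr2 ler_pM2r; lra.
  lra.
have l1 : (1 <= l)%N.
  case: l hl hq2 hs; last by [].
  move=> _ hq2 _; exfalso.
  have e3 : 1 <= eta ^+ 3.
    by rewrite exprn_ege1 //; lra.
  move: hq2; rewrite mulr0 sub0r powRN powRr1; last lra.
  have : eta^-1 <= 1 by rewrite invf_le1; lra.
  have -> : (2:R) ^+ 7 = 128 by rewrite -natrX.
  lra.
have hq2' : q%:R <= eta ^+ (2 * l - 1) / 2 ^+ 7.
  move: hq2; rewrite -(@powR_mulrn _ eta (2 * l - 1)); last lra.
  by rewrite natrB ?natrM // muln_gt0.
have target : N ^- 10 = expR (- (10 * ln N)).
  by rewrite expRN expRM_natl lnK.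
rewrite target.
have F := @final_num R (ln N) eta u131 eta_ge.
apply: le_trans (_ : \sum_(x <- s) w x * (2 * expR (- (eta / 12) + eta / 256)) <= _).
  rewrite big_seq [X in _ <= X]big_seq; apply: ler_sum => x xs.
  rewrite ler_pM2l ?wpos //.
  apply: tail => //.
  by apply/hs.
by rewrite -mulr_suml wsum mul1r.
Qed.
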